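(* Let $x\in\mathbb R$, $A,B\in\frac12\mathbb Z$ with $A\equiv B\bmod 1$. Then $$p(a,b,x)=\frac{\Gamma(A+a-x)\,\Gamma(B+b-x)}{\Gamma(A+a+x)\,\Gamma(B+b+x)}>0\quad\text{for all }a,b\in\mathbb Z_{\ge0}$$ if and only if either $A,B\in\mathbb Z_{\ge1}$ and $|x|<\min(A,B)$, or $A,B\in\frac12+\mathbb Z$ and $|x|<\max\bigl(\frac12,\min(A,B)\bigr)$. *)

(* Defs.v *)
From Stdlib Require Import Reals ZArith.
From Coquelicot Require Import Coquelicot.
Open Scope R_scope.

Definition Gamma_pos (t : R) : R :=
  RInt_gen (fun u => Rpower u (t - 1) * exp (- u)) (at_right 0) (Rbar_locally p_infty).

(* Extension to all real t by the functional equation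
   Gamma t = Gamma (t + N) / (t (t+1) ... (t+N-1)), with N chosen so that t + N > 0.
   At the poles t in Z_{<=0} the value is meaningless (a division by 0);
   we always guard its use with [Gamma_defined]. *)
Definition Gamma_shift (t : R) : nat := Z.to_nat (up (- t)).

Fixpoint rising (t : R) (n : nat) : R :=
  match n with O => 1 | S m => rising t m * (t + INR m) end.

Definition Gamma (t : R) : R :=
  Gamma_pos (t + INR (Gamma_shift t)) / rising t (Gamma_shift t).

Definition Gamma_defined (t : R) : Prop := forall n : nat, t <> - INR n.

Definition p_pos_at (A B x : R) (a b : nat) : Prop :=
  Gamma_defined (A + INR a - x) /\ Gamma_defined (B + INR b - x) /\
  Gamma_defined (A + INR a + x) /\ Gamma_defined (B + INR b + x) /\
  0 < (Gamma (A + INR a - x) * Gamma (B + INR b - x)) /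
      (Gamma (A + INR a + x) * Gamma (B + INR b + x)).

Definition is_half_int (A : R) : Prop := exists k : Z, 2 * A = IZR k.
Definition is_pos_int (A : R) : Prop := exists n : Z, (1 <= n)%Z /\ A = IZR n.
Definition in_half_plus_Z (A : R) : Prop := exists k : Z, A = / 2 + IZR k.

(* Main.v *)
Require Import Defs.
From Stdlib Require Import Reals ZArith Lra Lia Classical.
From Coquelicot Require Import Coquelicot.
Open Scope R_scope.

Definition fG (s u : R) : R := Rpower u (s - 1) * exp (- u).

Lemma ln_le_xm1 u : 0 < u -> ln u <= u - 1.
Proof.
  intros Hu. rewrite <- (ln_exp (u - 1)). apply ln_le; auto.
  generalize (exp_ineq1_le (u-1)); lra.
Qed.

Lemma fG_cont s u : 0 < u -> continuous (fG s) u.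
Proof.
  intros Hu. apply (ex_derive_continuous (fG s) u). unfold fG, Rpower.
  auto_derive. auto.
Qed.

Lemma fG_ex s a b : 0 < a -> a <= b -> ex_RInt (fG s) a b.
Proof.
  intros Ha Hab. apply (ex_RInt_continuous (V:=R_CompleteNormedModule)). intros z Hz.
  apply fG_cont. rewrite Rmin_left in Hz; lra.
Qed.

Lemma fG_pos s u : 0 < u -> 0 < fG s u.
Proof. intros. unfold fG, Rpower. apply Rmult_lt_0_compat; apply exp_pos. Qed.

Lemma bound01 s a : 0 < s -> 0 < a <= 1 -> RInt (fG s) a 1 <= / s.
Proof.
  intros Hs Ha.
  set (g := fun u => exp ((s - 1) * ln u)).
  set (F := fun u => exp (s * ln u) / s).
  assert (Hd : forall x, Rmin a 1 <= x <= Rmax a 1 -> is_derive F x (g x)).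
  { intros x Hx. rewrite Rmin_left in Hx by lra. rewrite Rmax_right in Hx by lra.
    unfold F, g. auto_derive. lra.
    replace ((s - 1) * ln x) with (s * ln x + - ln x) by ring.
    rewrite exp_plus, exp_Ropp, exp_ln by lra. field. split; lra. }
  assert (Hc : forall x, Rmin a 1 <= x <= Rmax a 1 -> continuous g x).
  { intros x Hx. rewrite Rmin_left in Hx by lra. rewrite Rmax_right in Hx by lra.
    apply (ex_derive_continuous g x). unfold g. auto_derive. lra. }
  generalize (is_RInt_derive F g a 1 Hd Hc). intros HI.
  apply Rle_trans with (RInt g a 1).
  - apply RInt_le. lra. apply fG_ex; lra. eexists; exact HI.
    intros x Hx. unfold fG, g, Rpower.
    rewrite <- (Rmult_1_r (exp ((s - 1) * ln x))) at 2.
    apply Rmult_le_compat_l. left; apply exp_pos.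
    rewrite exp_Ropp. rewrite <- Rinv_1. apply Rinv_le_contravar. lra.
    generalize (exp_ineq1_le x); lra.
  - rewrite (is_RInt_unique _ _ _ _ HI). unfold minus, plus, opp; simpl.
    unfold F. rewrite ln_1, Rmult_0_r, exp_0.
    assert (0 < exp (s * ln a)) by apply exp_pos.
    assert (0 < / s) by (apply Rinv_0_lt_compat; lra).
    unfold Rdiv. assert (0 < exp (s * ln a) * / s) by (apply Rmult_lt_0_compat; lra).
    lra.
Qed.

Lemma exp_le x y : x <= y -> exp x <= exp y.
Proof. intros [H|H]. left; apply exp_increasing; auto. subst; lra. Qed.

Lemma fG_tail s u : 1 <= u ->
  fG s u <= exp (Rabs (s - 1) * ln (2 * (Rabs (s - 1) + 1))) * exp (- u / 2).
Proof.
  intros Hu. unfold fG, Rpower. rewrite <- !exp_plus.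
  set (c := Rabs (s - 1)). set (k := 2 * (c + 1)).
  assert (Hc : 0 <= c) by apply Rabs_pos.
  assert (Hk : 0 < k) by (unfold k; lra).
  apply exp_le. 
  assert (Hl : 0 <= ln u) by (rewrite <- ln_1; apply ln_le; lra).
  assert (H1 : (s - 1) * ln u <= c * ln u).
  { apply Rmult_le_compat_r; auto. apply Rle_abs. }
  assert (H2 : ln u <= u / k - 1 + ln k).
  { replace (ln u) with (ln (u / k) + ln k).
    generalize (ln_le_xm1 (u / k)). intros H. 
    assert (0 < u / k) by (apply Rdiv_lt_0_compat; lra). specialize (H H0). lra.
    unfold Rdiv. rewrite ln_mult, ln_Rinv; try lra. apply Rinv_0_lt_compat; lra. }
  assert (H3 : c * ln u <= c * (u / k) + c * ln k).
  { apply Rle_trans with (c * (u / k - 1 + ln k)). apply Rmult_le_compat_l; auto. nra. }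
  assert (H4 : c * (u / k) <= u / 2).
  { unfold k. apply Rmult_le_reg_r with (2 * (c + 1)). lra.
    field_simplify. nra. lra. }
  lra.
Qed.

Lemma bound1inf s b : 1 <= b ->
  RInt (fG s) 1 b <= 2 * exp (Rabs (s - 1) * ln (2 * (Rabs (s - 1) + 1))).
Proof.
  intros Hb. set (C := exp (Rabs (s - 1) * ln (2 * (Rabs (s - 1) + 1)))).
  assert (HC : 0 < C) by apply exp_pos.
  set (g := fun u => C * exp (- u / 2)).
  set (F := fun u => - 2 * C * exp (- u / 2)).
  assert (Hd : forall x, Rmin 1 b <= x <= Rmax 1 b -> is_derive F x (g x)).
  { intros x Hx. unfold F, g. auto_derive. auto.  lra. }
  assert (Hc : forall x, Rmin 1 b <= x <= Rmax 1 b -> continuous g x).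
  { intros x Hx. apply (ex_derive_continuous g x). unfold g. auto_derive. auto. }
  generalize (is_RInt_derive F g 1 b Hd Hc). intros HI.
  apply Rle_trans with (RInt g 1 b).
  - apply RInt_le. lra. apply fG_ex; lra. eexists; exact HI.
    intros x Hx. apply fG_tail. lra.
  - rewrite (is_RInt_unique _ _ _ _ HI). unfold minus, plus, opp; simpl.
    unfold F. assert (0 < exp (- b / 2)) by apply exp_pos.
    assert (exp (- (1) / 2) <= 1).
    { generalize (exp_le (- (1) / 2) 0 ltac:(lra)). rewrite exp_0. auto. }
    nra.
Qed.


Lemma RIntR_Chasles f a b c : ex_RInt f a b -> ex_RInt f b c ->
  RInt f a b + RInt f b c = RInt f a c.
Proof. intros H1 H2. apply (RInt_Chasles (V:=R_CompleteNormedModule)); auto. Qed.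

Lemma fG_mono s a b a' b' : 0 < a' <= a -> a <= b -> b <= b' ->
  RInt (fG s) a b <= RInt (fG s) a' b'.
Proof.
  intros Ha Hab Hb.
  rewrite <- (RIntR_Chasles _ a' a b') by (apply fG_ex; lra).
  rewrite <- (RIntR_Chasles _ a b b') by (apply fG_ex; lra).
  assert (0 <= RInt (fG s) a' a).
  { apply RInt_ge_0. lra. apply fG_ex; lra. intros; left; apply fG_pos; lra. }
  assert (0 <= RInt (fG s) b b').
  { apply RInt_ge_0. lra. apply fG_ex; lra. intros; left; apply fG_pos; lra. }
  lra.
Qed.

Lemma Gamma_pos_pos s : 0 < s -> 0 < Gamma_pos s.
Proof.
  intros Hs.
  set (K := / s + 2 * exp (Rabs (s - 1) * ln (2 * (Rabs (s - 1) + 1)))).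
  set (E := fun y => exists a b, 0 < a <= 1 /\ 1 <= b /\ y = RInt (fG s) a b).
  assert (HB : bound E).
  { exists K. intros y [a [b [Ha [Hb ->]]]].
    rewrite <- (RIntR_Chasles _ a 1 b) by (apply fG_ex; lra).
    generalize (bound01 s a Hs Ha) (bound1inf s b Hb). unfold K. lra. }
  assert (HE : exists y, E y).
  { exists (RInt (fG s) 1 1). exists 1, 1. repeat split; lra. }
  destruct (completeness E HB HE) as [L [HL1 HL2]].
  assert (Hgen : is_RInt_gen (fG s) (at_right 0) (Rbar_locally p_infty) L).
  { intros P [eps Heps]. unfold filtermapi.
    assert (Hex : exists a0 b0, 0 < a0 <= 1 /\ 1 <= b0 /\ L - eps < RInt (fG s) a0 b0).
    { apply NNPP. intros Hn. assert (L <= L - eps).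
      { apply HL2. intros y [a [b [Ha [Hb ->]]]].
        destruct (Rle_lt_dec (RInt (fG s) a b) (L - eps)) as [h|h]; auto.
        exfalso; apply Hn; exists a, b; auto. }
      destruct eps; simpl in *; lra. }
    destruct Hex as [a0 [b0 [Ha0 [Hb0 Hlt]]]].
    apply (Filter_prod _ _ _ (fun a => 0 < a <= a0) (fun b => b0 <= b)).
    - assert (Ha0p : 0 < a0) by lra.
      exists (mkposreal a0 Ha0p). intros y Hy Hy0. simpl.
      unfold ball in Hy; simpl in Hy; unfold AbsRing_ball, abs, minus, plus, opp in Hy; simpl in Hy.
      apply Rabs_def2 in Hy. lra.
    - exists b0. intros; lra.
    - intros a b Ha Hb. exists (RInt (fG s) a b). split.
      + apply (RInt_correct (V:=R_CompleteNormedModule)). apply fG_ex; lra.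
      + apply Heps. unfold ball; simpl; unfold AbsRing_ball, abs, minus, plus, opp; simpl.
        assert (RInt (fG s) a b <= L).
        { apply HL1. exists a, b. repeat split; lra. }
        assert (RInt (fG s) a0 b0 <= RInt (fG s) a b).
        { apply fG_mono; lra. }
        apply Rabs_def1; lra. }
  assert (HG : Gamma_pos s = L).
  { 
    pose proof (Proper_StrongProper _ (at_right_proper_filter 0)) as P1.
    
    pose proof (Proper_StrongProper _ (Rbar_locally_filter p_infty)) as P2.
    
    pose proof (@is_RInt_gen_unique R_CompleteNormedModule _ _ P1 P2 (fG s) L Hgen) as HU.
    
    exact HU. }
  rewrite HG.
  apply Rlt_le_trans with (RInt (fG s) (/2) 1).
  - apply RInt_gt_0. lra. intros; apply fG_pos; lra.
    intros; apply fG_cont; lra.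
  - apply HL1. exists (/2), 1. repeat split; lra.
Qed.


Lemma rising_sign t m : t + INR m < 1 -> 0 < (-1)^m * rising t m.
Proof.
  induction m as [|m IH]; intros H.
  - simpl; lra.
  - rewrite S_INR in H. simpl.
    assert (0 < (-1)^m * rising t m) by (apply IH; lra).
    replace (-1 * (-1) ^ m * (rising t m * (t + INR m))) with
      (((-1)^m * rising t m) * (- (t + INR m))) by ring.
    apply Rmult_lt_0_compat; lra.
Qed.

Lemma Gamma_gt0 t : 0 < t -> 0 < Gamma t.
Proof.
  intros Ht. unfold Gamma, Gamma_shift.
  destruct (archimed (- t)) as [H1 H2].
  assert (Hu : (up (- t) < 1)%Z) by (apply lt_IZR; lra).
  replace (Z.to_nat (up (- t))) with 0%nat by lia.
  simpl. rewrite Rplus_0_r, Rdiv_1_r. apply Gamma_pos_pos; auto.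
Qed.

Lemma Gamma_neg_sign t n : - INR n - 1 < t < - INR n -> 0 < (-1)^(S n) * Gamma t.
Proof.
  intros Ht. unfold Gamma, Gamma_shift.
  assert (Hup : up (- t) = Z.of_nat (S n)).
  { symmetry; apply tech_up; rewrite <- INR_IZR_INZ, S_INR; lra. }
  rewrite Hup, Nat2Z.id.
  assert (Hp : 0 < Gamma_pos (t + INR (S n))) by (apply Gamma_pos_pos; rewrite S_INR; lra).
  assert (Hr : 0 < (-1)^(S n) * rising t (S n)) by (apply rising_sign; rewrite S_INR; lra).
  set (r := rising t (S n)) in *. set (q := (-1)^(S n)) in *.
  set (g := Gamma_pos (t + INR (S n))) in *.
  assert (Hr0 : r <> 0) by (intro E; rewrite E in Hr; lra).
  replace (q * (g / r)) with (g * (q * r) / (r * r)) by (field; auto).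
  apply Rdiv_lt_0_compat. apply Rmult_lt_0_compat; auto.
  assert (0 < r * r) by (destruct (Rlt_or_le 0 r); nra). auto.
Qed.

Lemma defined_pos t : 0 < t -> Gamma_defined t.
Proof. intros H n E. generalize (pos_INR n). lra. Qed.

Lemma defined_nonint t m : IZR m < t < IZR m + 1 -> Gamma_defined t.
Proof.
  intros H n E. rewrite E, INR_IZR_INZ, <- opp_IZR in H.
  destruct H as [H1 H2]. rewrite <- plus_IZR in H2.
  apply lt_IZR in H1. apply lt_IZR in H2. lia.
Qed.

Definition Q (A x : R) := forall a : nat,
  Gamma_defined (A + INR a - x) /\ Gamma_defined (A + INR a + x) /\
  0 < Gamma (A + INR a - x) * Gamma (A + INR a + x).

Lemma Q_sym A x : Q A x -> Q A (- x).
Proof.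
  intros H a. destruct (H a) as [d1 [d2 p]].
  replace (A + INR a - - x) with (A + INR a + x) by ring.
  replace (A + INR a + - x) with (A + INR a - x) by ring.
  repeat split; auto. rewrite Rmult_comm; auto.
Qed.

Lemma Q_abs A x : Q A x -> Q A (Rabs x).
Proof. intros H. unfold Rabs. destruct (Rcase_abs x); auto. apply Q_sym; auto. Qed.

Lemma key_contra A y : 0 <= y -> A <= y -> (/2 <= y \/ exists z, A = IZR z) -> Q A y -> False.
Proof.
  intros Hy HAy Hcase HQ.
  destruct (archimed (y - A)) as [H1 H2].
  set (w := up (y - A)) in *.
  assert (Hw : (0 < w)%Z) by (apply lt_0_IZR; lra).
  set (a := Z.to_nat (w - 1)).
  assert (Ha : INR a = IZR w - 1).
  { unfold a. rewrite INR_IZR_INZ, Z2Nat.id by lia. rewrite minus_IZR; auto. }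
  destruct (HQ a) as [d1 [d2 p]].
  destruct (Req_dec (A + INR a - y) 0) as [E|E].
  { apply (d1 0%nat). rewrite E. simpl. ring. }
  assert (Hneg : 0 < (-1)^1 * Gamma (A + INR a - y)).
  { apply Gamma_neg_sign. simpl. lra. }
  assert (Hpos : 0 < Gamma (A + INR a + y)).
  { apply Gamma_gt0. destruct Hcase as [Hc | [z Hz]].
    - lra.
    - assert (Ht : IZR (z + (w - 1)) = A + INR a) by (rewrite plus_IZR, minus_IZR, Hz, Ha; ring).
      assert (Hm : (-1 < z + (w - 1))%Z) by (apply lt_IZR; rewrite Ht; lra).
      assert (0 <= IZR (z + (w - 1))) by (apply IZR_le; lia).
      lra. }
  simpl in Hneg. nra.
Qed.

Lemma int_case A z x : A = IZR z -> Q A x -> Rabs x < A.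
Proof.
  intros Hz HQ. apply Q_abs in HQ.
  destruct (Rlt_or_le (Rabs x) A) as [h|h]; auto.
  exfalso. apply (key_contra A (Rabs x)); auto. apply Rabs_pos. right; eauto.
Qed.

Lemma half_case A z x : A = /2 + IZR z -> Q A x -> Rabs x < Rmax (/2) A.
Proof.
  intros Hz HQ. apply Q_abs in HQ.
  destruct (Rlt_or_le (Rabs x) (Rmax (/2) A)) as [h|h]; auto.
  exfalso. apply (key_contra A (Rabs x)); auto. apply Rabs_pos.
  generalize (Rmax_r (/2) A); lra. left. generalize (Rmax_l (/2) A); lra.
Qed.

Lemma pair_pos h x : Rabs x < h ->
  Gamma_defined (h - x) /\ Gamma_defined (h + x) /\ 0 < Gamma (h - x) * Gamma (h + x).
Proof.
  intros H. assert (0 < h - x /\ 0 < h + x) as [H1 H2].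
  { unfold Rabs in H; destruct (Rcase_abs x); lra. }
  repeat split; try apply defined_pos; auto.
  apply Rmult_lt_0_compat; apply Gamma_gt0; auto.
Qed.

Lemma half_small m x : Rabs x < /2 ->
  Gamma_defined (/2 + IZR m - x) /\ Gamma_defined (/2 + IZR m + x) /\
  0 < Gamma (/2 + IZR m - x) * Gamma (/2 + IZR m + x).
Proof.
  intros Hx. assert (Hx' : - /2 < x < /2) by (unfold Rabs in Hx; destruct (Rcase_abs x); lra).
  destruct (Z_lt_le_dec m 0) as [Hm|Hm].
  - set (n := Z.to_nat (- m - 1)).
    assert (Hn : INR n = - IZR m - 1).
    { unfold n. rewrite INR_IZR_INZ, Z2Nat.id by lia. rewrite minus_IZR, opp_IZR; auto. }
    repeat split.
    + apply (defined_nonint _ m); lra.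
    + apply (defined_nonint _ m); lra.
    + assert (P1 : 0 < (-1)^(S n) * Gamma (/2 + IZR m - x)) by (apply Gamma_neg_sign; lra).
      assert (P2 : 0 < (-1)^(S n) * Gamma (/2 + IZR m + x)) by (apply Gamma_neg_sign; lra).
      assert (Hq : (-1)^(S n) * (-1)^(S n) = 1).
      { rewrite <- Rpow_mult_distr. replace (-1 * -1) with 1 by ring. apply pow1. }
      set (q := (-1)^(S n)) in *.
      replace (Gamma (/ 2 + IZR m - x) * Gamma (/ 2 + IZR m + x)) with
        ((q * Gamma (/ 2 + IZR m - x)) * (q * Gamma (/ 2 + IZR m + x))).
      apply Rmult_lt_0_compat; auto.
      transitivity ((q * q) * (Gamma (/ 2 + IZR m - x) * Gamma (/ 2 + IZR m + x))). ring.
      rewrite Hq; ring.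
  - apply pair_pos. apply IZR_le in Hm. lra.
Qed.

Lemma combine G1 G2 G3 G4 : 0 < G1 * G3 -> 0 < G2 * G4 -> 0 < G1 * G2 / (G3 * G4).
Proof.
  intros H1 H2.
  assert (G3 <> 0) by (intro E; rewrite E in H1; lra).
  assert (G4 <> 0) by (intro E; rewrite E in H2; lra).
  replace (G1 * G2 / (G3 * G4)) with ((G1 * G3) * (G2 * G4) / ((G3 * G4) * (G3 * G4))) by (field; auto).
  apply Rdiv_lt_0_compat. apply Rmult_lt_0_compat; auto.
  assert (G3 * G4 <> 0) by (apply Rmult_integral_contrapositive; auto).
  destruct (Rlt_or_le 0 (G3 * G4)); nra.
Qed.

Lemma split_pos G1 G2 G3 G4 : 0 < G1 * G2 / (G3 * G4) -> 0 < G2 -> 0 < G4 -> 0 < G1 * G3.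
Proof.
  intros H H2 H4.
  destruct (Req_dec G3 0) as [E|E].
  { rewrite E, Rmult_0_l, Rdiv_0_r in H. lra. }
  replace (G1 * G3) with ((G1 * G2 / (G3 * G4)) * (G4 / G2) * (G3 * G3)) by (field; lra).
  apply Rmult_lt_0_compat. apply Rmult_lt_0_compat; auto. apply Rdiv_lt_0_compat; auto.
  destruct (Rlt_or_le 0 G3); nra.
Qed.

Lemma nat_gt r : exists n : nat, r < INR n.
Proof.
  destruct (archimed r) as [H1 _].
  exists (Z.to_nat (up r)). destruct (Z_lt_le_dec (up r) 0) as [h|h].
  - replace (Z.to_nat (up r)) with 0%nat by lia. apply IZR_lt in h. simpl; lra.
  - rewrite INR_IZR_INZ, Z2Nat.id; auto.
Qed.


Lemma QA_from_P A B x : (forall a b : nat, p_pos_at A B x a b) -> Q A x.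
Proof.
  intros P a. destruct (nat_gt (Rabs x - B)) as [b Hb].
  destruct (P a b) as [d1 [d2 [d3 [d4 H]]]].
  assert (0 < B + INR b - x /\ 0 < B + INR b + x) as [h1 h2]
    by (unfold Rabs in Hb; destruct (Rcase_abs x); lra).
  repeat split; auto.
  apply (split_pos _ _ _ _ H); apply Gamma_gt0; auto.
Qed.

Lemma QB_from_P A B x : (forall a b : nat, p_pos_at A B x a b) -> Q B x.
Proof.
  intros P b. destruct (nat_gt (Rabs x - A)) as [a Ha].
  destruct (P a b) as [d1 [d2 [d3 [d4 H]]]].
  assert (0 < A + INR a - x /\ 0 < A + INR a + x) as [h1 h2]
    by (unfold Rabs in Ha; destruct (Rcase_abs x); lra).
  repeat split; auto.
  assert (Hc : 0 < Gamma (B + INR b - x) * Gamma (A + INR a - x) /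
                   (Gamma (B + INR b + x) * Gamma (A + INR a + x))).
  { rewrite (Rmult_comm (Gamma (B + INR b - x))), (Rmult_comm (Gamma (B + INR b + x))). auto. }
  apply (split_pos _ _ _ _ Hc); apply Gamma_gt0; auto.
Qed.

Theorem lemma15p4 (x A B : R)
  (hA : is_half_int A) (hB : is_half_int B)
  (hAB : exists m : Z, A - B = IZR m) :
  (forall a b : nat, p_pos_at A B x a b) <->
  ((is_pos_int A /\ is_pos_int B /\ Rabs x < Rmin A B) \/
   (in_half_plus_Z A /\ in_half_plus_Z B /\ Rabs x < Rmax (/ 2) (Rmin A B))).
Proof.
  destruct hA as [k Hk]. destruct hAB as [m Hm].
  split.
  - intros P. pose proof (QA_from_P _ _ _ P) as QA. pose proof (QB_from_P _ _ _ P) as QB.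
    destruct (Zeven_odd_dec k) as [He|Ho].
    + apply Zeven_ex in He. destruct He as [j Hj]. subst k.
      assert (HA : A = IZR j) by (rewrite mult_IZR in Hk; lra).
      assert (HB : B = IZR (j - m)) by (rewrite minus_IZR; lra).
      pose proof (int_case _ _ _ HA QA) as h1. pose proof (int_case _ _ _ HB QB) as h2.
      assert (0 < A) by (generalize (Rabs_pos x); lra).
      assert (0 < B) by (generalize (Rabs_pos x); lra).
      left. split; [|split].
      * exists j. split; auto.
        assert (0 < j)%Z by (apply lt_0_IZR; lra). lia.
      * exists (j - m)%Z. split; auto.
        assert (0 < j - m)%Z by (apply lt_0_IZR; lra). lia.
      * unfold Rmin; destruct (Rle_dec A B); lra.
    + apply Zodd_ex in Ho. destruct Ho as [j Hj]. subst k.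
      assert (HA : A = /2 + IZR j) by (rewrite plus_IZR, mult_IZR in Hk; lra).
      assert (HB : B = /2 + IZR (j - m)) by (rewrite minus_IZR; lra).
      pose proof (half_case _ _ _ HA QA) as h1. pose proof (half_case _ _ _ HB QB) as h2.
      right. split; [|split].
      * exists j; auto.
      * exists (j - m)%Z; auto.
      * revert h1 h2. unfold Rmax, Rmin.
        destruct (Rle_dec (/2) A); destruct (Rle_dec (/2) B); destruct (Rle_dec A B);
          destruct (Rle_dec (/2) A); destruct (Rle_dec (/2) B); lra.
  - intros H a b.
    assert (Hpair : forall C, (exists z, C = IZR z /\ Rabs x < C) \/
                       (exists z, C = /2 + IZR z /\ (Rabs x < /2 \/ Rabs x < C)) ->
              forall c : nat, Gamma_defined (C + INR c - x) /\ Gamma_defined (C + INR c + x) /\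
                0 < Gamma (C + INR c - x) * Gamma (C + INR c + x)).
    { intros C [[z [Hz Hx]] | [z [Hz [Hx|Hx]]]] c.
      - apply pair_pos. generalize (pos_INR c); lra.
      - replace (C + INR c) with (/2 + IZR (z + Z.of_nat c)).
        apply half_small; auto.
        rewrite plus_IZR, <- INR_IZR_INZ; lra.
      - apply pair_pos. generalize (pos_INR c); lra. }
    assert (HC : forall C, C = A \/ C = B ->
       (exists z, C = IZR z /\ Rabs x < C) \/
       (exists z, C = /2 + IZR z /\ (Rabs x < /2 \/ Rabs x < C))).
    { intros C HCab. destruct H as [[[za [_ HzA]] [[zb [_ HzB]] Hx]] | [[za HzA] [[zb HzB] Hx]]].
      - left. destruct HCab; subst C; [exists za | exists zb]; split; auto;
        revert Hx; unfold Rmin; destruct (Rle_dec A B); lra.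
      - right. destruct HCab; subst C; [exists za | exists zb]; split; auto;
        revert Hx; unfold Rmax, Rmin; destruct (Rle_dec A B); destruct (Rle_dec (/2) A);
        destruct (Rle_dec (/2) B); lra. }
    destruct (Hpair A (HC A (or_introl eq_refl)) a) as [d1 [d3 p1]].
    destruct (Hpair B (HC B (or_intror eq_refl)) b) as [d2 [d4 p2]].
    unfold p_pos_at. repeat split; auto.
    apply combine; auto.
Qed.
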